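(* Let $W\in\mathbb{R}^{n\times n}$ be positive definite (i.e. $x^TWx>0$ for all nonzero $x$; $W$ need not be symmetric), with symmetric part $H=\frac12(W+W^T)$ and skew-symmetric part $S=\frac12(W-W^T)$. Let $B\in\mathbb{R}^{m\times n}$ with $\operatorname{rank}(B)<m\le n$, let $$A=\begin{pmatrix} W & B^T\\ -B & 0\end{pmatrix},$$ and let $b\in\mathbb{R}^{n+m}$ lie in the range of $A$. For $\omega>0$ let $P=\omega H$ and $$M=\begin{pmatrix} P & B^T\\ -B & 0\end{pmatrix}.$$ If $$\omega>\tfrac12\left(1+\rho\big(H^{-1/2}SH^{-1/2}\big)^2\right),$$ then the iteration $x^{(k+1)}=x^{(k)}+M^\dagger(b-Ax^{(k)})$, $k=0,1,2,\dots$, is convergent.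
   Context: $M^\dagger$ is the Moore–Penrose inverse of $M$; $\rho(\cdot)$ denotes the spectral radius; $H^{-1/2}$ is the inverse of the symmetric positive definite square root of $H$. The iteration is called convergent if the sequence $x^{(k)}$ converges (to a solution of $Ax=b$) for every initial guess $x^{(0)}$; equivalently, with $T=I-M^\dagger A$, the limit $\lim_{k\to\infty}T^k$ exists. *)

(* Defs.v *)
From HB Require Import structures.
From mathcomp Require Import all_boot all_order all_algebra.
From mathcomp Require Import all_classical all_reals all_analysis.
From mathcomp Require Import complex.
Set Implicit Arguments. Unset Strict Implicit. Unset Printing Implicit Defensive.
Import Order.TTheory GRing.Theory Num.Theory.
Import numFieldNormedType.Exports.
Local Open Scope ring_scope.
Local Open Scope classical_set_scope.

Definition posdef (R : realType) (n : nat) (W : 'M[R]_n) : Prop :=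
  forall x : 'cV[R]_n, x != 0 -> 0 < (x^T *m W *m x) ord0 ord0.

Definition symmetric_mx (R : realType) (n : nat) (Q : 'M[R]_n) : Prop :=
  Q^T = Q.

(* X is the Moore--Penrose inverse of M (the four Penrose conditions;
   for real matrices the adjoint is the transpose). *)
Definition is_MP_inverse (R : realType) (p q : nat)
    (M : 'M[R]_(p, q)) (X : 'M[R]_(q, p)) : Prop :=
  [/\ M *m X *m M = M, X *m M *m X = X,
      (M *m X)^T = M *m X & (X *m M)^T = X *m M].

Definition cmod (R : realType) (z : R[i]) : R :=
  Num.sqrt (complex.Re z ^+ 2 + complex.Im z ^+ 2).

Definition spectral_radius (R : realType) (n : nat) (K : 'M[R]_n) : R :=
  sup [set cmod z | z in [set z : R[i] |
         eigenvalue (map_mx (fun x : R => x%:C%C) K) z]].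

Fixpoint iterate (R : realType) (N : nat) (A X : 'M[R]_N) (b x0 : 'cV[R]_N)
    (k : nat) : 'cV[R]_N :=
  match k with
  | 0 => x0
  | k'.+1 => let x := iterate A X b x0 k' in x + X *m (b - A *m x)
  end.

Definition iteration_convergent (R : realType) (N : nat) (A X : 'M[R]_N)
    (b : 'cV[R]_N) : Prop :=
  forall x0 : 'cV[R]_N, exists2 xs : 'cV[R]_N,
    iterate A X b x0 k @[k --> \oo] --> xs & A *m xs = b.

(* Main.v *)
Require Import Defs.
From HB Require Import structures.
From mathcomp Require Import all_boot all_order all_algebra.
From mathcomp Require Import all_classical all_reals all_analysis.
From mathcomp Require Import complex.
From mathcomp Require Import ring lra.
Import Order.TTheory GRing.Theory Num.Theory.
Import numFieldNormedType.Exports.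
Local Open Scope ring_scope.
Set Implicit Arguments. Unset Strict Implicit. Unset Printing Implicit Defensive.


Section Q.
Variable R : realType.

Definition q n (a d : 'cV[R]_n) : R := (a^T *m d) 0 0.

Lemma qE n (a d : 'cV[R]_n) : q a d = \sum_i a i 0 * d i 0.
Proof. by rewrite /q mxE; apply: eq_bigr => i _; rewrite mxE. Qed.

Lemma qC n (a d : 'cV[R]_n) : q a d = q d a.
Proof. by rewrite !qE; apply: eq_bigr => i _; rewrite mulrC. Qed.

Lemma qDl n (a a' d : 'cV[R]_n) : q (a + a') d = q a d + q a' d.
Proof. by rewrite !qE -big_split; apply: eq_bigr => i _; rewrite mxE mulrDl. Qed.

Lemma qDr n (a d d' : 'cV[R]_n) : q a (d + d') = q a d + q a d'.
Proof. by rewrite qC qDl !(qC _ a). Qed.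

Lemma qZl n (c : R) (a d : 'cV[R]_n) : q (c *: a) d = c * q a d.
Proof. by rewrite !qE mulr_sumr; apply: eq_bigr => i _; rewrite mxE mulrA. Qed.

Lemma qZr n (c : R) (a d : 'cV[R]_n) : q a (c *: d) = c * q a d.
Proof. by rewrite qC qZl qC. Qed.

Lemma qNl n (a d : 'cV[R]_n) : q (- a) d = - q a d.
Proof. by rewrite -scaleN1r qZl mulN1r. Qed.

Lemma qNr n (a d : 'cV[R]_n) : q a (- d) = - q a d.
Proof. by rewrite -scaleN1r qZr mulN1r. Qed.

Lemma qBl n (a a' d : 'cV[R]_n) : q (a - a') d = q a d - q a' d.
Proof. by rewrite qDl qNl. Qed.

Lemma qBr n (a d d' : 'cV[R]_n) : q a (d - d') = q a d - q a d'.
Proof. by rewrite qDr qNr. Qed.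

Lemma q0l n (d : 'cV[R]_n) : q 0 d = 0.
Proof. by rewrite qE big1 // => i _; rewrite mxE mul0r. Qed.

Lemma q0r n (d : 'cV[R]_n) : q d 0 = 0.
Proof. by rewrite qC q0l. Qed.

Lemma qM n k (L : 'M[R]_(k, n)) (a : 'cV[R]_k) (d : 'cV[R]_n) :
  q a (L *m d) = q (L^T *m a) d.
Proof. by rewrite /q trmx_mul trmxK mulmxA. Qed.

Lemma q_ge0 n (a : 'cV[R]_n) : 0 <= q a a.
Proof. by rewrite qE; apply: sumr_ge0 => i _; rewrite -expr2 sqr_ge0. Qed.

Lemma q_eq0 n (a : 'cV[R]_n) : q a a = 0 -> a = 0.
Proof.
rewrite qE => /eqP; rewrite psumr_eq0 => [/allP H|i _]; last by rewrite -expr2 sqr_ge0.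
apply/matrixP => i j; rewrite ord1 mxE.
have := H i (mem_index_enum _); rewrite /= -expr2 sqrf_eq0 => /eqP //.
Qed.

Lemma qcol n1 n2 (a1 d1 : 'cV[R]_n1) (a2 d2 : 'cV[R]_n2) :
  q (col_mx a1 a2) (col_mx d1 d2) = q a1 d1 + q a2 d2.
Proof. by rewrite /q tr_col_mx mul_row_col mxE. Qed.

Lemma CS n (a d : 'cV[R]_n) : q a d ^+ 2 <= q a a * q d d.
Proof.
have [d0|dn0] := eqVneq (q d d) 0.
  by rewrite (q_eq0 d0) q0r q0r expr0n /= mulr0.
have gd : 0 < q d d by rewrite lt_def dn0 q_ge0.
pose t := q a d / q d d.
have := q_ge0 (a - t *: d).
rewrite !(qBl, qBr, qZl, qZr) (qC d a) /t.
set x := q a d; set y := q d d; set z := q a a => H.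
have := mulr_ge0 H (ltW gd).
have E : (z - x / y * x - x / y * (x - x / y * y)) * y = z * y - x ^+ 2.
  by field.
by rewrite E subr_ge0.
Qed.
End Q.

Section W3.
Variable R : realType.

Lemma qL_cont n k (L : 'M[R]_(k,n)) :
  continuous (fun v : 'rV[R]_n => q (L *m v^T) (L *m v^T)).
Proof.
have lin i : continuous (fun v : 'rV[R]_n => (L *m v^T) i 0).
  have -> : (fun v : 'rV[R]_n => (L *m v^T) i 0) =
     (fun v => \sum_(j <- index_enum 'I_n | true) (fun j (v : 'rV[R]_n) => L i j * v 0 j) j v).
    by apply/funext => v; rewrite mxE; apply: eq_bigr => j _; rewrite mxE.
  apply: continuous_big; first exact: add_continuous.
  move=> j _ x; apply: continuousM; first exact: cst_continuous.
  exact: coord_continuous.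
have -> : (fun v : 'rV[R]_n => q (L *m v^T) (L *m v^T)) =
   (fun v => \sum_(i <- index_enum 'I_k | true)
      (fun i (v : 'rV[R]_n) => (L *m v^T) i 0 * (L *m v^T) i 0) i v).
  by apply/funext => v; rewrite qE.
apply: continuous_big; first exact: add_continuous.
by move=> i _ x; apply: continuousM; apply: lin.
Qed.

End W3.

Section W4.
Variable R : realType.

Lemma mxnorm_le m n (v : 'M[R]_(m,n)) (c : R) :
  0 <= c -> (forall i j, `|v i j| <= c) -> `|v| <= c.
Proof.
move=> c0 H; rewrite [leLHS]/Num.norm /= mx_normrE; apply: bigmax_le => // -[i j] _.
Qed.

Lemma entry_le_norm m n (v : 'M[R]_(m,n)) i j : `|v i j| <= `|v|.
Proof.
rewrite [leRHS]/Num.norm /= mx_normrE; apply/bigmax_geP; right => /=.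
by exists (i, j).
Qed.

Lemma entry_sq_le_q n (x : 'cV[R]_n) i : x i 0 ^+ 2 <= q x x.
Proof.
rewrite qE (bigD1 i) //= -expr2 lerDl; apply: sumr_ge0 => j _.
by rewrite -expr2 sqr_ge0.
Qed.

Lemma max_exists n (K : 'M[R]_n.+1) : exists2 x : 'cV[R]_n.+1, q x x = 1 &
  forall y, q (K *m y) (K *m y) <= q (K *m x) (K *m x) * q y y.
Proof.
pose A := [set v : 'rV[R]_n.+1 | q v^T v^T = 1]%classic.
have A0 : (A !=set0)%classic.
  exists (delta_mx 0 0); rewrite /A /= /q trmxK trmx_delta mul_delta_mx mxE.
  by rewrite !eqxx.
have gc : continuous (fun v : 'rV[R]_n.+1 => q v^T v^T).
  have := @qL_cont R n.+1 n.+1 1%:M.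
  by under eq_fun do rewrite mul1mx.
have cA : compact A.
  apply: bounded_closed_compact.
    exists 1; split; first by rewrite num_real.
    move=> M M1 v Av; apply: mxnorm_le; first by rewrite (le_trans _ (ltW M1)).
    move=> i j; rewrite ord1.
    have := entry_sq_le_q v^T j; rewrite Av mxE => h.
    apply: le_trans (ltW M1); rewrite ler_norml; apply/andP; split; nra.
  exact: (closed_comp (fun x _ => gc x) (@closed_eq R 1)).
have fc := @qL_cont R n.+1 n.+1 K.
have [c cA' cmax] := compact_EVT_max A0 cA (continuous_subspaceT fc).
exists c^T; first by move: cA'; rewrite inE.
move=> y; have [->|yn0] := eqVneq y 0.
  by rewrite mulmx0 !q0r mulr0.
have qy : 0 < q y y by rewrite lt_def q_ge0 andbT; apply/eqP => /q_eq0 /eqP; rewrite (negbTE yn0).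
set l := Num.sqrt (q y y).
have l0 : 0 < l by rewrite sqrtr_gt0.
have := cmax ((l^-1 *: y)^T); rewrite !trmxK -scalemxAr !(qZl, qZr) => h.
have ll : l * l = q y y by rewrite -expr2 sqr_sqrtr // q_ge0.
have hA : (l^-1 *: y)^T \in A.
  rewrite inE /A /= trmxK qZl qZr -ll; field; exact: lt0r_neq0.
have {}h := h hA.
have -> : q (K *m y) (K *m y) = l^-1 * (l^-1 * q (K *m y) (K *m y)) * q y y.
  rewrite -ll; field; exact: lt0r_neq0.
by rewrite ler_wpM2r // q_ge0.
Qed.
End W4.

Section W5.
Variable R : realType.

Lemma max_eig n (K : 'M[R]_n) x s : q x x = 1 -> q (K *m x) (K *m x) = s ->
  (forall y, q (K *m y) (K *m y) <= s * q y y) -> K^T *m (K *m x) = s *: x.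
Proof.
move=> hx hs H.
have [y ydef] : {y | y = K^T *m (K *m x) - s *: x} by exists (K^T *m (K *m x) - s *: x).
suff : q y y = 0 by move/q_eq0/eqP; rewrite ydef subr_eq0 => /eqP.
have keyid : q (K *m x) (K *m y) = q y y + s * q x y.
  rewrite qM; have -> : K^T *m (K *m x) = y + s *: x by rewrite ydef subrK.
  by rewrite qDl qZl.
set β := q y y; set γ := s * β - q (K *m y) (K *m y).
have γ0 : 0 <= γ by rewrite /γ subr_ge0 H.
have β0 : 0 <= β by exact: q_ge0.
have key t : 2 * t * β <= t ^+ 2 * γ.
  have := H (x + t *: y).
  rewrite mulmxDr -scalemxAr !(qDl, qDr, qZl, qZr) (qC (K *m y) (K *m x)) (qC y x).
  rewrite hx hs keyid /γ; set a := q x y; set b := q (K *m y) (K *m y) => h.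
  rewrite /β expr2; nra.
pose t := β / (γ + 1).
have bt : β = t * (γ + 1) by rewrite /t; field; lra.
have := key t; clearbody t β γ; rewrite bt => h.
have E : 2 * t * (t * (γ + 1)) - t ^+ 2 * γ = t ^+ 2 * (γ + 2) by ring.
have h2 : t ^+ 2 * (γ + 2) <= 0 by rewrite -E subr_le0.
have : t ^+ 2 <= 0.
  have g1 := mulr_ge0 (sqr_ge0 t) γ0.
  by move: h2; rewrite mulrDr; lra.
rewrite expr2 => h3.
have -> : t = 0 by nra.
by rewrite mul0r.
Qed.

End W5.

Section W6.
Variable R : realType.

Lemma sr_ge n (K : 'M[R]_n) (z : R[i]) :
  eigenvalue (map_mx (fun x : R => x%:C%C) K) z -> cmod z <= spectral_radius K.
Proof.
move=> ez; rewrite /spectral_radius; apply: sup_upper_bound; last by exists z.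
split; first by exists (cmod z); exists z.
have [rs Hrs] := closed_field_poly_normal (char_poly (map_mx (fun x : R => x%:C%C) K)).
exists (\sum_(r <- rs) cmod r) => _ [w ew <-].
have : w \in rs.
  move: ew; rewrite /= eigenvalue_root_char Hrs rootZ ?root_prod_XsubC //.
  by rewrite (monicP (char_poly_monic _)) oner_eq0.
move=> wrs; rewrite (big_rem w wrs) /= lerDl; apply: sumr_ge0 => r _.
exact: sqrtr_ge0.
Qed.

End W6.

Section W7.
Variable R : realType.

Lemma skew_bound n (K : 'M[R]_n) : K^T = - K ->
  forall c, q (K *m c) (K *m c) <= spectral_radius K ^+ 2 * q c c.
Proof.
case: n K => [|n] K sk c.
  by rewrite [c]flatmx0 mulmx0 !q0r mulr0.
have [x hx hmax] := max_exists K.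
set s := q (K *m x) (K *m x) in hmax.
have eig := max_eig hx erefl hmax.
have s0 : 0 <= s by exact: q_ge0.
suff : s <= spectral_radius K ^+ 2.
  move=> h; apply: le_trans (hmax c) _; apply: ler_wpM2r => //; exact: q_ge0.
set σ := Num.sqrt s.
have ss : s = σ ^+ 2 by rewrite sqr_sqrtr.
have σ0 : 0 <= σ by exact: sqrtr_ge0.
have [σz|σn] := eqVneq σ 0.
  by rewrite ss σz expr0n /= sqr_ge0.
have σp : 0 < σ by rewrite lt_def σn.
pose r := x^T.
have rKK : r *m K *m K = - (s *: r).
  have h : K *m (K *m x) = - (s *: x).
    by rewrite -eig sk mulNmx opprK.
  have <- : (K *m (K *m x))^T = r *m K *m K.
    by rewrite !trmx_mul sk !mulmxN mulNmx opprK.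
  by rewrite h linearN /= linearZ.
pose f := fun a : R => (a%:C)%C.
pose z : R[i] := Complex 0 σ.
have zz : z * z = - (f s).
  by rewrite /z /f ss; simpc; rewrite expr2.
have cz : cmod z = σ.
  by rewrite /cmod /z /= expr0n /= add0r sqrtr_sqr ger0_norm.
pose w := map_mx f (r *m K) + z *: map_mx f r.
have ew : w *m map_mx f K = z *: w.
  rewrite /w mulmxDl -scalemxAl -!map_mxM rKK map_mxN map_mxZ scalerDr scalerA zz scaleNr addrC.
  by [].
have wn : w != 0.
  apply/negP => /eqP w0.
  have r0 : r = 0.
    apply/matrixP => i j.
    have := congr1 (fun M : 'rV[R[i]]_n.+1 => complex.Im (M i j)) w0.
    rewrite /w !mxE /z /f /=.
    by rewrite mul0r !add0r => /eqP; rewrite mulf_eq0 (negbTE σn) => /eqP.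
  by move: hx; rewrite -[x]trmxK -/r r0 trmx0 q0r => /eqP; rewrite eq_sym oner_eq0.
have : eigenvalue (map_mx f K) z by apply/eigenvalueP; exists w.
move/sr_ge; rewrite cz => h.
rewrite ss; nra.
Qed.
End W7.

Section W8.
Variable R : realType.

Lemma posdefq n (W : 'M[R]_n) : posdef W -> forall x, x != 0 -> 0 < q x (W *m x).
Proof. by move=> h x /h; rewrite /q mulmxA. Qed.

Lemma posdef_eq0 n (W : 'M[R]_n) x : posdef W -> q x (W *m x) <= 0 -> x = 0.
Proof.
move=> h; have [->//|xn] := eqVneq x 0.
by move: (posdefq h xn) => /lt_le_trans H /H; rewrite ltxx.
Qed.

Lemma qT n (W : 'M[R]_n) x : q x (W^T *m x) = q x (W *m x).
Proof. by rewrite qM trmxK qC. Qed.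

Lemma row_q k n (N : 'M[R]_(k, n)) (c : 'cV[R]_n) i :
  (N *m c) i 0 = q (row i N)^T c.
Proof. by rewrite qE mxE; apply: eq_bigr => j _; rewrite !mxE. Qed.

Lemma sym_unit n (Hh : 'M[R]_n) : symmetric_mx Hh -> posdef Hh -> Hh \in unitmx.
Proof.
move=> sy pd; rewrite unitmxE unitfE; apply/negP => /det0P [v vn vH].
have : v^T = 0.
  apply: (posdef_eq0 pd); rewrite -{1}sy -trmx_mul vH trmx0 q0r //.
by move/(congr1 trmx); rewrite trmxK trmx0 => v0; rewrite v0 eqxx in vn.
Qed.

End W8.

Theorem theorem2 (R : realType) (n m : nat)
  (W : 'M[R]_n) (B : 'M[R]_(m, n)) (b : 'cV[R]_(n + m)) (omega : R)
  (Hhalf : 'M[R]_n) (X : 'M[R]_(n + m)) :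
  posdef W ->
  (\rank B < m)%N -> (m <= n)%N ->
  (exists y : 'cV[R]_(n + m), block_mx W B^T (- B) 0 *m y = b) ->
  0 < omega ->
  (* Hhalf is the symmetric positive definite square root of H = (W + W^T)/2 *)
  symmetric_mx Hhalf -> posdef Hhalf ->
  Hhalf *m Hhalf = 2^-1 *: (W + W^T) ->
  (* X is the Moore--Penrose inverse of M = [[omega H, B^T], [-B, 0]] *)
  is_MP_inverse (block_mx (omega *: (2^-1 *: (W + W^T))) B^T (- B) 0) X ->
  2^-1 * (1 + spectral_radius
            (invmx Hhalf *m (2^-1 *: (W - W^T)) *m invmx Hhalf) ^+ 2) < omega ->
  iteration_convergent (block_mx W B^T (- B) 0) X b.
Proof.
move=> pW _ _ [y Ay] om0 syH pdH HH [MXM XMX MXs XMs] hom.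
set H := 2^-1 *: (W + W^T) in HH MXM XMX MXs XMs.
set S := 2^-1 *: (W - W^T) in hom.
set G := invmx Hhalf in hom.
set K := G *m S *m G in hom.
set ρ := spectral_radius K in hom.
set P := omega *: H in MXM XMX MXs XMs.
set M := block_mx P B^T (- B) 0 in MXM XMX MXs XMs.
set A := block_mx W B^T (- B) 0 in Ay *.
have WHS : W = H + S.
  by apply/matrixP => i j; rewrite /H /S !mxE; field.
have HT : H^T = H by rewrite /H linearZ /= linearD /= trmxK addrC.
have ST : S^T = - S by rewrite /S linearZ /= linearB /= trmxK -scalerN opprB.
have qS u : q u (S *m u) = 0.
  by have := qT S u; rewrite ST mulNmx qNr; lra.
have qH u : q u (H *m u) = q u (W *m u) by rewrite WHS mulmxDl qDr qS addr0.
have pH : posdef H.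
  move=> x xn; have := posdefq pW xn; rewrite -qH /q mulmxA //.
have pP u : q u (P *m u) <= 0 -> u = 0.
  move=> h; apply: (posdef_eq0 pH); rewrite /P -scalemxAl qZr in h.
  by rewrite -(pmulr_rle0 _ om0).
have Hu := sym_unit syH pdH.
have HG : Hhalf *m G = 1%:M by rewrite mulmxV.
have GH : G *m Hhalf = 1%:M by rewrite mulVmx.
have GT : G^T = G by rewrite /G trmx_inv syH.
have SK : S = Hhalf *m K *m Hhalf by rewrite /K !mulmxA HG mul1mx -mulmxA GH mulmx1.
have KT : K^T = - K by rewrite /K !trmx_mul GT ST mulNmx mulmxN mulmxA.
have Kb := skew_bound KT.
clearbody H S G K.
have qK0 c : q c (K *m c) = 0.
  by have := qT K c; rewrite KT mulNmx qNr; lra.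
have PT : P^T = P by rewrite /P linearZ /= HT.
have AM (z : 'cV[R]_(n + m)) : A *m z = M *m z + col_mx ((W - P) *m usubmx z) 0.
  rewrite -[z]vsubmxK /A /M !mul_block_col col_mxKu add_col_mx addr0.
  by rewrite mulmxBl addrAC [P *m _ + _]addrC subrK.
have ATM (w : 'cV[R]_(n + m)) : A^T *m w = M^T *m w + col_mx ((W - P)^T *m usubmx w) 0.
  rewrite -[w]vsubmxK /A /M !tr_block_mx !mul_block_col col_mxKu add_col_mx addr0.
  by rewrite linearB /= mulmxBl addrAC [P^T *m _ + _]addrC subrK.
have MTw (w : 'cV[R]_(n + m)) : M^T *m w = 0 -> A^T *m w = 0.
  move=> h; rewrite ATM h add0r.
  suff -> : usubmx w = 0 by rewrite mulmx0 col_mx0.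
  move: h; rewrite -[w]vsubmxK /M tr_block_mx mul_block_col -col_mx0 col_mxKu.
  move=> /eq_col_mx [h1 h2].
  rewrite trmxK trmx0 mul0mx addr0 in h2.
  apply: pP; rewrite -PT.
  have -> : P^T *m usubmx w = B^T *m dsubmx w.
    by apply/eqP; rewrite -subr_eq0 -h1 linearN /= mulNmx.
  by rewrite qM trmxK h2 q0l.
have MXA (f : 'cV[R]_(n + m)) : M *m (X *m (A *m f)) = A *m f.
  set w := A *m f - M *m (X *m (A *m f)).
  have Mw : M^T *m w = 0.
    rewrite /w mulmxBr !mulmxA.
    have E : M^T = M^T *m (M *m X).
      by rewrite -{1}MXM trmx_mul MXs.
    have -> : M^T *m M *m X = M^T by rewrite -mulmxA -E.
    by rewrite subrr.
  have Aw := MTw _ Mw.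
  have : q w w = 0.
    rewrite {2}/w qBr qM Aw q0l qM Mw q0l subrr //.
  by move/q_eq0/eqP; rewrite subr_eq0 => /eqP.
have MA0 (z : 'cV[R]_(n + m)) : M *m z = 0 -> A *m z = 0.
  move=> h; rewrite AM h add0r.
  suff -> : usubmx z = 0 by rewrite mulmx0 col_mx0.
  move: h; rewrite -[z]vsubmxK /M mul_block_col -col_mx0 col_mxKu.
  move=> /eq_col_mx [h1 h2].
  rewrite mul0mx addr0 mulNmx in h2.
  move/eqP: h2; rewrite oppr_eq0 => /eqP h2.
  apply: pP.
  have -> : P *m usubmx z = - (B^T *m dsubmx z).
    by apply/eqP; rewrite -subr_eq0 opprK h1.
  by rewrite qNr qM trmxK h2 q0l oppr0.
move=> x0.
pose it k := iterate A X b x0 k.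
pose e0 := x0 - y.
pose z := e0 - X *m (M *m e0).
pose xs := y + z.
have Mz : M *m z = 0 by rewrite /z mulmxBr !mulmxA MXM subrr.
have Axs : A *m xs = b by rewrite /xs mulmxDr Ay (MA0 _ Mz) addr0.
exists xs; last exact: Axs.
pose f k := it k - xs.
have fS k : f k.+1 = f k - X *m (A *m f k).
  rewrite /f /it /= -/(it k) -Axs -mulmxBr.
  by rewrite -(opprB (it k) xs) !mulmxN addrAC.
have fX k : X *m (M *m f k) = f k.
  elim: k => [|k IH].
    have -> : f 0%N = X *m (M *m e0).
      by rewrite /f /it /= /xs /z /e0 opprD opprB addrA addrC subrK.
    by rewrite !mulmxA XMX.
  by rewrite fS mulmxBr mulmxBr IH !mulmxA XMX.
have Mf k : M *m f k.+1 = col_mx ((P - W) *m usubmx (f k)) 0.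
  rewrite fS mulmxBr MXA AM opprD addrA subrr add0r opp_col_mx oppr0.
  by rewrite -mulNmx opprB.
have ff k : f k.+1 = X *m col_mx ((P - W) *m usubmx (f k)) 0 by rewrite -Mf fX.
have syH' : Hhalf^T = Hhalf := syH.
have qHx (x1 y1 : 'cV[R]_n) : q x1 (H *m y1) = q (Hhalf *m x1) (Hhalf *m y1).
  by rewrite -HH -mulmxA [LHS]qM syH'.
have qSx (x1 y1 : 'cV[R]_n) : q x1 (S *m y1) = q (Hhalf *m x1) (K *m (Hhalf *m y1)).
  by rewrite SK -!mulmxA [LHS]qM syH'.
pose c k := Hhalf *m usubmx (f k).
pose h k := q (c k) (c k).
pose T := (omega - 1) ^+ 2 + ρ ^+ 2.
have T0 : 0 <= T by rewrite /T addr_ge0 // sqr_ge0.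
have contr k : omega ^+ 2 * h k.+1 <= T * h k.
  have := Mf k; rewrite -[f k.+1]vsubmxK /M mul_block_col.
  move=> /eq_col_mx [e1 e2].
  rewrite mul0mx addr0 mulNmx in e2.
  move/eqP: e2; rewrite oppr_eq0 => /eqP e2.
  set u := usubmx (f k) in e1.
  set u' := usubmx (f k.+1) in e1 e2.
  have key : omega * q u' (H *m u') = q u' ((P - W) *m u).
    by rewrite -e1 qDr [q u' (B^T *m _)]qM trmxK e2 q0l addr0 /P -scalemxAl qZr.
  rewrite WHS /P mulmxBl mulmxDl -scalemxAl qBr qDr qZr !qHx qSx in key.
  rewrite /h /c -/u -/u'.
  set a := Hhalf *m u' in key *; set cc := Hhalf *m u in key *.
  pose d := (omega - 1) *: cc - K *m cc.
  have qad : q a d = omega * q a a.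
    by rewrite /d qBr qZr key; ring.
  have qdd : q d d <= T * q cc cc.
    rewrite /d !(qBl, qBr, qZl, qZr) qK0 (qC (K *m cc) cc) qK0.
    have := Kb cc; rewrite /T -/ρ; set kk := q (K *m cc) (K *m cc).
    set cq := q cc cc; move=> hk.
    rewrite !mulr0 !subr0; nra.
  have cs := CS a d.
  rewrite qad in cs.
  have qa0 : 0 <= q a a by exact: q_ge0.
  have qc0 : 0 <= q cc cc by exact: q_ge0.
  have [qaz|qap] := eqVneq (q a a) 0.
    by rewrite qaz mulr0 mulr_ge0.
  have qap' : 0 < q a a by rewrite lt_def qap qa0.
  have : omega ^+ 2 * q a a * q a a <= T * q cc cc * q a a.
    apply: le_trans (_ : q a a * q d d <= _).
      by move: cs; rewrite exprMn expr2 mulrA.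
    by rewrite mulrC ler_wpM2r.
  by rewrite ler_pM2r.
pose θ := T / omega ^+ 2.
have om2 : 0 < omega ^+ 2 by rewrite exprn_gt0.
have θ0 : 0 <= θ by rewrite /θ divr_ge0 // ltW.
have θ1 : θ < 1.
  rewrite /θ ltr_pdivrMr // mul1r /T.
  have : 1 + ρ ^+ 2 < 2 * omega by move: hom; lra.
  move=> h1; rewrite sqrrB1 !expr2; nra.
have h0 k : 0 <= h k by exact: q_ge0.
have hb k : h k <= θ ^+ k * h 0%N.
  elim: k => [|k IH]; first by rewrite expr0 mul1r.
  have : h k.+1 <= θ * h k.
    by rewrite /θ mulrAC ler_pdivlMr // mulrC contr.
  move=> /le_trans; apply; rewrite exprS -mulrA ler_wpM2l //.
pose N := X *m col_mx (P - W) 0 *m G.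
have fN k : f k.+1 = N *m c k.
  rewrite ff /N /c -!mulmxA (mulmxA G) GH mul1mx mul_col_mx mul0mx //.
pose CN := \sum_i q (row i N)^T (row i N)^T.
have CN0 : 0 <= CN by apply: sumr_ge0 => i _; exact: q_ge0.
have entry k i : (f k.+1 i 0) ^+ 2 <= CN * h k.
  rewrite fN row_q; apply: le_trans (CS _ _) _.
  apply: ler_wpM2r; first exact: q_ge0.
  rewrite /CN (bigD1 i) //= lerDl.
  by apply: sumr_ge0 => j _; exact: q_ge0.
have f0 : (f x @[x --> \oo] --> (0 : 'cV[R]_(n + m)))%classic.
  rewrite -cvg_shiftS; apply/cvgr0Pnorm_lt => eps eps0.
  have θn : `|θ| < 1 by rewrite ger0_norm.
  pose eps' := (eps / 2) ^+ 2 / (CN * h 0%N + 1).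
  have CNh : 0 < CN * h 0%N + 1 by rewrite ltr_pwDr // mulr_ge0.
  have eps'0 : 0 < eps' by rewrite /eps' divr_gt0 // exprn_gt0 // divr_gt0.
  apply: filterS ((cvgr0Pnorm_lt _).1 (cvg_expr θn) eps' eps'0) => k /= hk.
  apply: le_lt_trans (_ : eps / 2 < eps); last by lra.
  apply: mxnorm_le; first by lra.
  move=> i j; rewrite ord1.
  have e1 := entry k i.
  have e2 : CN * h k <= CN * h 0%N * θ ^+ k by rewrite -mulrA ler_wpM2l // mulrC hb.
  rewrite ger0_norm in hk; last exact: exprn_ge0.
  have e3 : CN * h 0%N * θ ^+ k <= (eps / 2) ^+ 2.
    have epsE : (CN * h 0%N + 1) * eps' = (eps / 2) ^+ 2.
      by rewrite /eps' mulrC divfK // gt_eqF.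
    have : (CN * h 0%N + 1) * θ ^+ k <= (CN * h 0%N + 1) * eps'.
      by rewrite ler_wpM2l // ltW.
    rewrite epsE => h5.
    have := exprn_ge0 k θ0; nra.
  have e4 := le_trans e1 (le_trans e2 e3).
  rewrite ler_norml; apply/andP; split; nra.
have E : it = (fun k => xs + f k) by apply/funext => k; rewrite /f addrC subrK.
rewrite -/it E -[X in (_ --> X)%classic]addr0; apply: cvgD => //; exact: cvg_cst.
Qed.
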